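(* Let $G=\mathrm{SL}(2,\mathbb{C})$. For $i=1,2,3$ let $\mathbf{a}_i\in G$ with $\mathrm{tr}(\mathbf{a}_i)=t_i$, put $\overline{\mathbf{a}}_i=\mathbf{a}_i-(t_i/2)\mathbf{e}$ and $s_{ij}=\mathrm{tr}(\overline{\mathbf{a}}_i\overline{\mathbf{a}}_j)$, and let $S=(s_{ij})_{i,j=1}^3$. (i) The matrices $\overline{\mathbf{a}}_1,\overline{\mathbf{a}}_2,\overline{\mathbf{a}}_3$ are linearly independent (over $\mathbb{C}$) if and only if $\det(S)\neq 0$. (ii) Suppose $\det(S)\neq0$. Let $s_{14},s_{24},s_{34},t_4\in\mathbb{C}$ be given, and set $s_{44}=\tfrac12 t_4^2-2$ and $s_{4i}=s_{i4}$ for $i=1,2,3$. Then there exists $\mathbf{a}_4\in G$ with $\mathrm{tr}(\mathbf{a}_4)=t_4$ and $\mathrm{tr}(\overline{\mathbf{a}}_i\overline{\mathbf{a}}_4)=s_{i4}$ for $1\le i\le 3$, where $\overline{\mathbf{a}}_4=\mathbf{a}_4-(t_4/2)\mathbf{e}$, if and only if $\det\big((s_{ij})_{i,j=1}^4\big)=0$.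
   Context: $\mathbf{e}$ denotes the $2\times2$ identity matrix. *)

(* Defs.v *)
From HB Require Import structures.
From mathcomp Require Import all_boot all_order all_algebra.
From mathcomp Require Import complex.
From mathcomp Require Import Rstruct.
Set Implicit Arguments. Unset Strict Implicit. Unset Printing Implicit Defensive.
Import Order.TTheory GRing.Theory Num.Theory.
Local Open Scope ring_scope.

Notation C := (complex Rdefinitions.R).

Definition abar (a : 'M[C]_2) : 'M[C]_2 :=
  a - (\tr a / 2)%:M.

Definition Smat (a : 'I_3 -> 'M[C]_2) : 'M[C]_3 :=
  \matrix_(i < 3, j < 3) \tr (abar (a i) *m abar (a j)).

Definition S4mat (a : 'I_3 -> 'M[C]_2)
    (u : 'I_3 -> C) (t4 : C)
    : 'M[C]_(3 + 1) :=
  block_mx (Smat a) (\col_i u i) (\row_j u j) ((t4 ^+ 2 / 2 - 2)%:M).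

(* Main.v *)
Require Import Defs.
From HB Require Import structures.
From mathcomp Require Import all_boot all_order all_algebra.
From mathcomp Require Import complex.
From mathcomp Require Import Rstruct.
From mathcomp Require Import ring.
Import Order.TTheory GRing.Theory Num.Theory.
Local Open Scope ring_scope.

Lemma sum2 (F : 'I_2 -> C) : \sum_(i < 2) F i = F 0 + F 1.
Proof.
rewrite !big_ord_recr big_ord0 /= add0r; congr (F _ + F _); exact/val_inj.
Qed.

Lemma sum3 (F : 'I_3 -> C) : \sum_(i < 3) F i = F 0 + F 1 + F 2.
Proof.
rewrite !big_ord_recr big_ord0 /= add0r; congr (F _ + F _ + F _); exact/val_inj.
Qed.

Lemma tr2 (M : 'M[C]_2) : \tr M = M 0 0 + M 1 1.
Proof. by rewrite /mxtrace sum2. Qed.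

Lemma det2 (M : 'M[C]_2) : \det M = M 0 0 * M 1 1 - M 0 1 * M 1 0.
Proof.
rewrite (expand_det_row M 0) sum2.
rewrite /cofactor !det_mx11 !mxE /=.
have -> : lift 0 (0 : 'I_1) = 1 :> 'I_2 by exact/val_inj.
have -> : lift 1 (0 : 'I_1) = 0 :> 'I_2 by exact/val_inj.
by rewrite expr0 expr1 mul1r mulN1r mulrN.
Qed.

Lemma mul2 (M N : 'M[C]_2) : \tr (M *m N) = M 0 0 * N 0 0 + M 0 1 * N 1 0 + M 1 0 * N 0 1 + M 1 1 * N 1 1.
Proof. by rewrite tr2 !mxE !sum2 addrA. Qed.

Definition Q : 'M[C]_3 := \matrix_(i,j) (if (i == 0) && (j == 0) then 2 else if ((i == 1) && (j == 2)) || ((i==2)&&(j==1)) then 1 else 0).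

Lemma qformM m n (B : 'M[C]_(m,3)) (D : 'M[C]_(n,3)) i j :
  (B *m Q *m D^T) i j = 2 * B i 0 * D j 0 + B i 1 * D j 2 + B i 2 * D j 1.
Proof. rewrite !mxE !sum3 !mxE !sum3 !mxE /=; ring. Qed.

Lemma two_neq0 : (2 : C) != 0.
Proof. by rewrite pnatr_eq0. Qed.

Lemma detQ : \det Q != 0.
Proof.
set Qi : 'M[C]_3 := \matrix_(i,j) (if (i == 0) && (j == 0) then 2^-1 else if ((i == 1) && (j == 2)) || ((i==2)&&(j==1)) then 1 else 0).
have h : Q *m Qi = 1%:M.
  apply/matrixP => i j; rewrite !mxE sum3 !mxE.
  case: i => [[|[|[|i]]] Hi] //; case: j => [[|[|[|j]]] Hj] //=;
   rewrite ?mulr0 ?mul0r ?mulr1 ?addr0 ?add0r ?mulfV ?two_neq0 //.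
have [hu _] := mulmx1_unit h.
by rewrite unitmxE unitfE in hu.
Qed.

Definition rI (j : 'I_3) : 'I_2 := if j == 2 then 1 else 0.
Definition cI (j : 'I_3) : 'I_2 := if j == 1 then 1 else 0.
Definition cv (X : 'M[C]_2) : 'rV[C]_3 := \row_j X (rI j) (cI j).

Lemma cv0 X : cv X 0 0 = X 0 0. Proof. by rewrite mxE. Qed.
Lemma cv1 X : cv X 0 1 = X 0 1. Proof. by rewrite mxE. Qed.
Lemma cv2 X : cv X 0 2 = X 1 0. Proof. by rewrite mxE. Qed.

Lemma traceless11 (M : 'M[C]_2) : \tr M = 0 -> M 1 1 = - M 0 0.
Proof. by rewrite tr2 => /eqP; rewrite addrC addr_eq0 => /eqP. Qed.

Lemma key (M N : 'M[C]_2) : \tr M = 0 -> \tr N = 0 ->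
  \tr (M *m N) = (cv M *m Q *m (cv N)^T) 0 0.
Proof.
move=> /traceless11 hM /traceless11 hN.
by rewrite mul2 qformM !mxE hM hN /=; ring.
Qed.

Lemma tr_abar M : \tr (abar M) = 0.
Proof.
rewrite /abar linearB /= mxtrace_scalar mulr2n -splitr subrr //.

Qed.

Definition Amat (a : 'I_3 -> 'M[C]_2) : 'M[C]_3 := \matrix_(i,j) cv (abar (a i)) 0 j.

Lemma SmatE a : Smat a = Amat a *m Q *m (Amat a)^T.
Proof.
apply/matrixP => i j; rewrite [LHS]mxE key ?tr_abar // !qformM !mxE //.
Qed.

Lemma detS a : \det (Smat a) = \det (Amat a) * (\det Q * \det (Amat a)).
Proof. by rewrite SmatE !det_mulmx det_tr mulrA. Qed.

Lemma S4fact a u t4 (x : 'rV[C]_3) :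
  (forall i, u i = (Amat a *m Q *m x^T) i 0) ->
  S4mat a u t4 = block_mx (Amat a) 0 x 1%:M *m
     block_mx (Q *m (Amat a)^T) (Q *m x^T) 0 ((t4^+2/2 - 2 - (x *m Q *m x^T) 0 0)%:M).
Proof.
move=> hu; rewrite mulmx_block /S4mat.
rewrite !mulmx0 !mul0mx !addr0 mul1mx mulmxA -SmatE; congr block_mx.
- by apply/colP => i; rewrite mxE hu mulmxA.
- apply/rowP => j; rewrite [LHS]mxE hu [in RHS]mulmxA !qformM; ring.
- apply/rowP => j; rewrite (ord1 j) [RHS]mxE mulmxA !mxE /= !mulr1n. ring.
Qed.

Lemma detS4 a u t4 (x : 'rV[C]_3) :
  (forall i, u i = (Amat a *m Q *m x^T) i 0) ->
  \det (S4mat a u t4) = \det (Smat a) * (t4^+2/2 - 2 - (x *m Q *m x^T) 0 0).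
Proof.
move=> hu; rewrite (S4fact _ _ t4 _ hu) det_mulmx det_lblock det_ublock det1 mulr1.
by rewrite det_mx11 mxE /= mulr1n det_mulmx det_tr detS mulrA.
Qed.

Lemma cv_sum a (k : 'I_3 -> C) :
  cv (\sum_(i < 3) k i *: abar (a i)) = \row_i k i *m Amat a.
Proof.
apply/rowP => j; rewrite !mxE summxE; apply: eq_bigr => i _; rewrite !mxE //.
Qed.

Lemma cv_inj0 (Y : 'M[C]_2) : \tr Y = 0 -> cv Y = 0 -> Y = 0.
Proof.
move=> /traceless11 h11 h.
have e0 : Y 0 0 = 0 by rewrite -cv0 h mxE.
have e1 : Y 0 1 = 0 by rewrite -cv1 h mxE.
have e2 : Y 1 0 = 0 by rewrite -cv2 h mxE.
apply/matrixP => r c; rewrite mxE.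
case: r => [[|[|r]] Hr] //; case: c => [[|[|c]] Hc] //.
- by rewrite -e0; congr (Y _ _); exact/val_inj.
- by rewrite -e1; congr (Y _ _); exact/val_inj.
- by rewrite -e2; congr (Y _ _); exact/val_inj.
- have -> : Ordinal Hr = 1 by exact/val_inj.
  have -> : Ordinal Hc = 1 by exact/val_inj.
  by rewrite h11 e0 oppr0.
Qed.

Theorem mainTheorem1 (a : 'I_3 -> 'M[C]_2) (ha : forall i, \det (a i) = 1) :
  (free [seq abar (a i) | i <- enum 'I_3] <-> \det (Smat a) != 0) /\
  (\det (Smat a) != 0 ->
   forall (u : 'I_3 -> C) (t4 : C),
     (exists a4 : 'M[C]_2,
        [/\ \det a4 = 1, \tr a4 = t4 &
            forall i : 'I_3, \tr (abar (a i) *m abar a4) = u i])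
     <-> \det (S4mat a u t4) = 0).
Proof.
have hA : \det (Smat a) != 0 <-> \det (Amat a) != 0.
  rewrite detS !mulf_eq0 (negbTE detQ) /= orbb; by [].
have -> : [seq abar (a i) | i <- enum 'I_3] = [tuple abar (a i) | i < 3] :> seq _.
  by rewrite /mktuple.
have hsum : forall k, \sum_(i < 3) k i *: [tuple abar (a i) | i < 3]`_i
                    = \sum_(i < 3) k i *: abar (a i).
  by move=> k; apply: eq_bigr => i _; rewrite nth_mktuple.
split.
  rewrite hA; split.
    move/freeP => hf; apply/negP => /det0P [v hv0 hvA].
    apply: (negP hv0); apply/eqP/rowP => i; rewrite mxE.
    apply: (hf (fun i => v 0 i)).
    rewrite hsum; apply: cv_inj0.
      by rewrite raddf_sum /=; apply: big1 => j _; rewrite linearZ /= tr_abar ?scaler0 ?mulr0.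
    rewrite cv_sum -hvA; congr (_ *m _); apply/rowP => j; rewrite mxE //.
  move=> hdA; apply/freeP => k; rewrite hsum => hk i.
  have h0 : \row_i k i *m Amat a = 0.
    by rewrite -cv_sum hk; apply/rowP => j; rewrite !mxE.
  move: h0 => /eqP; rewrite mulmx_free_eq0; last by rewrite row_free_unit unitmxE unitfE.
  by move=> /eqP /rowP /(_ i); rewrite !mxE.
move=> hS u t4; have hdA := proj1 hA hS.
split.
  case=> a4 [hdet htr hu].
  set x := cv (abar a4).
  have hu' : forall i, u i = (Amat a *m Q *m x^T) i 0.
    by move=> i; rewrite -hu key ?tr_abar // !qformM !mxE.
  rewrite (detS4 _ _ t4 _ hu'); apply/eqP; rewrite mulf_eq0; apply/orP; right; apply/eqP.
  rewrite qformM /x !cv0 !cv1 !cv2 /abar !mxE /= -htr tr2.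
  apply: (eq_trans (_ : _ = 2 * (a4 0 0 * a4 1 1 - a4 0 1 * a4 1 0 - 1))).

    rewrite ?mulr1n ?mulr0n ?subr0; by field.
  by rewrite -det2 hdet subrr mulr0.
move=> h0.
have hAQ : Amat a *m Q \in unitmx by rewrite unitmxE det_mulmx unitfE mulf_neq0 // detQ.
set x : 'rV[C]_3 := (invmx (Amat a *m Q) *m \col_i u i)^T.
have hu : forall i, u i = (Amat a *m Q *m x^T) i 0.
  by move=> i; rewrite /x trmxK mulKVmx // mxE.
clearbody x.
move: h0; rewrite (detS4 _ _ t4 _ hu) => /eqP; rewrite mulf_eq0 (negbTE hS) /= => /eqP hd.
rewrite qformM in hd.
set X : 'M[C]_2 := \matrix_(r, c) (if r == 0 then (if c == 0 then x 0 0 else x 0 1)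
                                  else (if c == 0 then x 0 2 else - x 0 0)).
have htr : \tr (X + (t4 / 2)%:M) = t4.
  rewrite tr2 !mxE /= ?mulr1n; by field.
have hX : abar (X + (t4 / 2)%:M) = X by rewrite /abar htr addrK.
have trX : \tr X = 0 by rewrite tr2 !mxE /= subrr.
exists (X + (t4 / 2)%:M); split => //.
  rewrite det2 !mxE /= ?mulr1n ?mulr0n ?addr0 ?add0r.
  have e : forall z : C, z = 0 -> 1 + z / 2 = 1 by move=> z ->; rewrite mul0r addr0.
  apply: (eq_trans _ (e _ hd)). by field.
by move=> i; rewrite hX key ?tr_abar // hu !qformM !mxE /=.
Qed.
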